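(* Let $k,n$ be positive integers with $k\leqslant n$, and let $X\subseteq [n]^k_<$ have the quasi-exchange property. Then every linear extension of $X$ (with respect to the Bruhat order) is a shelling order.
   Context: $[n]:=\{1,\ldots,n\}$. $[n]^k_<$ denotes the set of $k$-element subsets of $[n]$, each identified with the increasing tuple $x=(x_1<\cdots<x_k)$ of its elements (so set operations $\cap,\cup,\setminus$ and the symmetric difference $A+B:=(A\setminus B)\cup(B\setminus A)$ make sense). A subset $X\subseteq[n]^k_<$ is viewed as (the set of facets of) a pure $(k-1)$-dimensional simplicial complex. The Bruhat order on $[n]^k_<$ is: $x\leqslant y$ iff $x_i\leqslant y_i$ for all $i\in[k]$. $\mathrm{Conf}([n]^k_<)$ is the set of finite tuples $C=(C_1,\ldots,C_h)$, $h\geqslant 1$, of pairwise distinct elements of $[n]^k_<$. A linear extension of $X$ is a tuple $L=(L_1,\ldots,L_h)$ listing every element of $X$ exactly once such that $L_i<L_j$ in the Bruhat order implies $i<j$. A tuple $C=(C_1,\ldots,C_h)\in\mathrm{Conf}([n]^k_<)$ is a shelling order if for all $i<j$ in $[h]$ there exists $z<j$ with $|C_z\cap C_j|=k-1$ and $C_i\cap C_j\subseteq C_z\cap C_j$. $X$ has the quasi-exchange property if for all $x,y\in X$ and every $i\in x\setminus y$ with $i>\max(y\setminus x)$, there exists $j\in y\setminus x$ such that $x+\{i,j\}\in X$. *)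

(* Defs.v *)
From mathcomp Require Import all_boot.
Set Implicit Arguments. Unset Strict Implicit. Unset Printing Implicit Defensive.

(* [n] is modelled by 'I_n = {0,...,n-1} (order-preserving shift by one).
   An element of [n]^k_< is a set A : {set 'I_n} with #|A| = k. *)

Definition sorted_tuple (n : nat) (A : {set 'I_n}) : seq nat :=
  sort leq [seq val i | i <- enum A].

Definition bruhat_le (n : nat) (x y : {set 'I_n}) : bool :=
  (#|x| == #|y|) &&
  [forall i : 'I_#|x|, nth 0 (sorted_tuple x) i <= nth 0 (sorted_tuple y) i].

Definition bruhat_lt (n : nat) (x y : {set 'I_n}) : bool :=
  (x != y) && bruhat_le x y.

Definition symdiff (T : finType) (A B : {set T}) : {set T} :=
  (A :\: B) :|: (B :\: A).

Definition k_family (n k : nat) (X : {set {set 'I_n}}) : Prop :=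
  forall x, x \in X -> #|x| = k.

Definition quasi_exchange (n : nat) (X : {set {set 'I_n}}) : Prop :=
  forall x y, x \in X -> y \in X ->
  forall i, i \in x :\: y ->
    (forall j, j \in y :\: x -> val j < val i) ->
    exists2 j, j \in y :\: x & symdiff x [set i; j] \in X.

Definition conf (n k : nat) (C : seq {set 'I_n}) : Prop :=
  0 < size C /\ uniq C /\ (forall c, c \in C -> #|c| = k).

Definition linear_extension (n : nat) (X : {set {set 'I_n}})
  (L : seq {set 'I_n}) : Prop :=
  uniq L /\ (forall x, (x \in L) = (x \in X)) /\
  (forall i j, i < size L -> j < size L ->
     bruhat_lt (nth set0 L i) (nth set0 L j) -> i < j).

Definition shelling_order (n k : nat) (C : seq {set 'I_n}) : Prop :=
  conf k C /\
  forall i j, i < j -> j < size C ->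
    exists2 z, z < j &
      (#|nth set0 C z :&: nth set0 C j| == k.-1) &&
      ((nth set0 C i :&: nth set0 C j) \subset (nth set0 C z :&: nth set0 C j)).

(* Main.v *)
Require Import Defs.
From mathcomp Require Import all_boot.
Lemma cnt_enum (T : finType) (A : {set T}) (P : pred T) :
  count P (enum A) = #|[set c in A | P c]|.
Proof.
rewrite -size_filter cardE /enum_mem -filter_predI; congr size.
apply: eq_filter => c /=; by rewrite !inE andbC.
Qed.
Lemma count_st n (A : {set 'I_n}) t :
  count (fun c => c <= t) (sorted_tuple A) = #|[set c in A | val c <= t]|.
Proof.
by rewrite /sorted_tuple ((permP (permEl (perm_sort _ _))) (fun c => c <= t)) count_map cnt_enum.
Qed.
Lemma size_st n (A : {set 'I_n}) : size (sorted_tuple A) = #|A|.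
Proof. by rewrite /sorted_tuple size_sort size_map cardE. Qed.
Lemma sorted_st n (A : {set 'I_n}) : sorted leq (sorted_tuple A).
Proof. exact: (sort_sorted leq_total). Qed.
Lemma card_exch n (y : {set 'I_n}) a b : a \in y -> b \notin y ->
  #|b |: (y :\ a)| = #|y|.
Proof.
move=> Ha Hb; rewrite cardsU1 (cardsD1 a y) Ha !inE negb_and Hb orbT /=.
by rewrite add1n.
Qed.
Lemma cnt_exch n (y : {set 'I_n}) a b t : a \in y -> b \notin y -> val b < val a ->
  #|[set c in y | val c <= t]| <= #|[set c in b |: (y :\ a) | val c <= t]|.
Proof.
move=> Ha Hb Hba.
case: (leqP (val a) t) => Hat.
  have Hb' : b \notin [set c in y | val c <= t] by rewrite inE negb_and Hb.
  have HaS : a \in [set c in y | val c <= t] by rewrite inE Ha Hat.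
  rewrite -(@card_exch _ _ a b HaS Hb'); apply: subset_leq_card; apply/subsetP => c.
  rewrite !inE => /orP [/eqP ->|/andP [Hca /andP [Hcy Hct]]].
    by rewrite eqxx /= (leq_trans (ltnW Hba) Hat).
  by rewrite Hct Hcy Hca orbT.
apply: subset_leq_card; apply/subsetP => c; rewrite !inE => /andP [Hcy Hct].
rewrite Hct Hcy !andbT; apply/orP; right; apply/eqP => Hca; move: Hct; rewrite Hca leqNgt Hat.
by [].
Qed.
Lemma nth_le_count (s : seq nat) i t : sorted leq s -> i < size s ->
  (nth 0 s i <= t) = (i < count (fun c => c <= t) s).
Proof.
elim: s i => [|a s IH] i //= Hs Hi.
have Hall : all (leq a) s by apply: order_path_min => //; exact: leq_trans.
have Hss : sorted leq s by apply: path_sorted Hs.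
case: (leqP a t) => Hat.
  by case: i Hi => [|i] Hi //=; rewrite add1n ltnS IH.
have Hnh : ~~ has (fun c => c <= t) s.
  by apply/hasPn => c /(allP Hall) Hac; rewrite -ltnNge; exact: leq_trans Hat Hac.
rewrite has_count -leqNgt leqn0 in Hnh; rewrite (eqP Hnh) add0n ltn0.
case: i Hi => [|i] Hi /=; first by rewrite leqNgt Hat.
apply/negbTE; rewrite -ltnNge; apply: leq_trans Hat _.
by apply/(allP Hall)/mem_nth.
Qed.
Lemma bruhat_exch n (y : {set 'I_n}) a b : a \in y -> b \notin y -> val b < val a ->
  bruhat_lt (b |: (y :\ a)) y.
Proof.
move=> Ha Hb Hba; apply/andP; split.
  apply/eqP => E; move: Hb; rewrite -E !inE eqxx; by [].
apply/andP; split; first by rewrite (@card_exch _ _ a b Ha Hb).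
apply/forallP => i.
have Hi : i < #|y| by rewrite -(@card_exch _ _ a b Ha Hb).
set t := nth 0 (sorted_tuple y) i.
rewrite nth_le_count ?sorted_st ?size_st // count_st.
apply: leq_trans (@cnt_exch _ _ a b t Ha Hb Hba).
by rewrite -count_st -nth_le_count ?sorted_st ?size_st.
Qed.
Lemma symdiff_exch n (y : {set 'I_n}) i j : i \in y -> j \notin y ->
  symdiff y [set i; j] = j |: (y :\ i).
Proof.
move=> Hi Hj; apply/setP => c; rewrite /symdiff !inE.
have Hij : i != j by apply/eqP => E; move: Hj; rewrite -E Hi.
have [->|Hci] := eqVneq c i; first by rewrite Hi (negbTE Hij).
have [->|Hcj] := eqVneq c j; first by rewrite (negbTE Hj).
by rewrite /= andbF orbF.
Qed.

Theorem theorem3p4 (n k : nat) (X : {set {set 'I_n}}) :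
  0 < k -> k <= n -> X != set0 -> k_family k X -> quasi_exchange X ->
  forall L : seq {set 'I_n}, linear_extension X L -> shelling_order k L.
Proof.
move=> k0 kn Xn0 Hk QE L [Lu [LX Lord]].
have Hidx : forall w v, w \in X -> v \in X -> bruhat_lt w v -> index w L < index v L.
  move=> w v Hw Hv Hwv; apply: Lord; rewrite ?index_mem ?LX ?nth_index ?LX //.
split.
  split; last split => //.
    case/set0Pn: Xn0 => x0; rewrite -LX; by case: (L).
  by move=> c; rewrite LX => /Hk.
move=> i j Hij Hj.
set y := nth set0 L j.
have Hy : y \in X by rewrite -LX mem_nth.
have Hyj : index y L = j by rewrite index_uniq.
have Hky : #|y| = k by apply: Hk.
have key : forall m x, x \in X -> index x L < j -> #|x :\: y| < m ->
    exists2 z, z < j & (#|nth set0 L z :&: y| == k.-1) &&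
      (x :&: y \subset nth set0 L z :&: y).
  elim=> [|m IH] x Hx Hxj Hm //.
  have Hxy : x != y by apply/eqP => E; move: Hxj; rewrite E Hyj ltnn.
  have [c0 Hc0] : exists c0, c0 \in symdiff x y.
    apply/set0Pn/negP => /eqP E; move/negP: Hxy; apply; apply/eqP.
    apply/eqP; rewrite eqEsubset -!setD_eq0.
    by move/eqP: E; rewrite /symdiff setU_eq0 => /andP [-> ->].
  case: (@arg_maxnP _ c0 (fun c => c \in symdiff x y) (fun c => val c) Hc0).
  move=> m0 Hm0 Hmax.
  have Hxk : #|x| = k by apply: Hk.
  move: Hm0; rewrite /symdiff inE => /orP [Hm0|Hm0].
  -
    move: (Hm0); rewrite inE => /andP [Hm0y Hm0x].
    have Hlt : forall c, c \in y :\: x -> val c < val m0.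
      move=> c Hc; rewrite ltn_neqAle; apply/andP; split; last first.
        by apply: Hmax; rewrite /symdiff inE Hc ?orbT.
      apply/eqP => /val_inj E; move: Hc; rewrite E inE Hm0x; by [].
    have [c Hc Hw] := QE x y Hx Hy m0 Hm0 Hlt.
    move: (Hc); rewrite inE => /andP [Hcx Hcy].
    rewrite symdiff_exch // in Hw.
    have Hbr : bruhat_lt (c |: (x :\ m0)) x by apply: bruhat_exch => //; apply: Hlt.
    have Hx'j : index (c |: (x :\ m0)) L < j.
      by apply: ltn_trans Hxj; apply: Hidx.
    have Hcard : #|(c |: (x :\ m0)) :\: y| < m.
      rewrite -ltnS; apply: leq_trans Hm.
      rewrite (cardsD1 m0 (x :\: y)) Hm0 add1n ltnS.
      apply: subset_leq_card; apply/subsetP => d; rewrite !inE.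
      case/andP => Hdy /orP [/eqP Hdc|/andP [Hdm Hdx]].
        by move: Hdy; rewrite Hdc Hcy.
      by rewrite Hdm Hdy Hdx.
    have [z Hz /andP [Hz1 Hz2]] := IH _ Hw Hx'j Hcard.
    exists z => //; rewrite Hz1 /=; apply: subset_trans Hz2.
    apply/subsetP => d; rewrite !inE => /andP [Hdx Hdy]; rewrite Hdy Hdx !andbT; apply/orP; right.
    apply/eqP => E; move: Hm0y; rewrite -E Hdy; by [].
  -
    move: (Hm0); rewrite inE => /andP [Hm0x Hm0y].
    have Hlt : forall c, c \in x :\: y -> val c < val m0.
      move=> c Hc; rewrite ltn_neqAle; apply/andP; split; last first.
        by apply: Hmax; rewrite /symdiff inE Hc ?orbT.
      apply/eqP => /val_inj E; move: Hc; rewrite E inE Hm0y; by [].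
    have [c Hc Hw] := QE y x Hy Hx m0 Hm0 Hlt.
    move: (Hc); rewrite inE => /andP [Hcy Hcx].
    rewrite symdiff_exch // in Hw.
    have Hbr : bruhat_lt (c |: (y :\ m0)) y by apply: bruhat_exch => //; apply: Hlt.
    have Hwl : c |: (y :\ m0) \in L by rewrite LX.
    exists (index (c |: (y :\ m0)) L); first by rewrite -Hyj; apply: Hidx.
    rewrite nth_index //.
    have -> : (c |: (y :\ m0)) :&: y = y :\ m0.
      apply/setP => d; rewrite !inE; case: (eqVneq d c) => [->|] /=.
        by rewrite (negbTE Hcy) andbF; case: (c =P m0) => // E; move: Hcy; rewrite E Hm0y.
      by move=> _; rewrite -andbA andbb.
    rewrite -Hky (cardsD1 m0 y) Hm0y add1n /= eqxx /=.
    apply/subsetP => d; rewrite !inE => /andP [Hdx Hdy]; rewrite Hdy andbT.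
    apply/eqP => E; move: Hm0x; rewrite -E Hdx; by [].
have := key (#|nth set0 L i :\: y|).+1 (nth set0 L i).
have Hi : i < size L by apply: ltn_trans Hj.
rewrite -LX mem_nth // index_uniq //.
by move=> /(_ isT Hij (ltnSn _)).
Qed.
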